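(* Let $(x_n)$ be a nonincreasing interval-filling sequence of positive reals with cardinal function $f$. Then $\mathrm{rng}(f)=\{1,2\}$ if and only if there exists $c>0$ such that $x_n=c/2^n$ for every $n\in\mathbb{N}$.
   Context: For a summable sequence $\mathbf{x}=(x_n)$ of positive reals, $\mathcal{A}(\mathbf{x})=\{\sum_{n\in A}x_n: A\subseteq\mathbb{N}\}$ is its achievement set and its cardinal function $f$ assigns to $x\in\mathcal{A}(\mathbf{x})$ the cardinality (a positive integer, $\omega$, or $\mathfrak{c}$) of $\{(\varepsilon_n)\in\{0,1\}^{\mathbb{N}}:\sum\varepsilon_nx_n=x\}$. The sequence is interval-filling if $\mathcal{A}(\mathbf{x})$ is an interval. *)

(* Defs.v *)
From HB Require Import structures.
From mathcomp Require Import all_boot all_order all_algebra.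
From mathcomp Require Import all_classical all_reals all_analysis.
Set Implicit Arguments. Unset Strict Implicit. Unset Printing Implicit Defensive.
Import Order.TTheory GRing.Theory Num.Theory.
Import numFieldNormedType.Exports.
Local Open Scope classical_set_scope.
Local Open Scope ring_scope.

(* sum_{n in A} x_n, with A coded by its indicator eps : nat -> bool,
   converges to y *)
Definition subsum_to {R : realType} (x : nat -> R) (eps : nat -> bool) (y : R) : Prop :=
  (fun N => \sum_(0 <= n < N) (if eps n then x n else 0)) @ \oo --> y.

Definition summable_seq {R : realType} (x : nat -> R) : Prop :=
  exists l : R, (fun N => \sum_(0 <= n < N) x n) @ \oo --> l.

Definition achievement_set {R : realType} (x : nat -> R) : set R :=
  [set y | exists eps, subsum_to x eps y].

(* the set whose cardinality is the cardinal function f(y) *)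
Definition representations {R : realType} (x : nat -> R) (y : R) : set (nat -> bool) :=
  [set eps | subsum_to x eps y].

Definition interval_filling {R : realType} (x : nat -> R) : Prop :=
  forall a b z, achievement_set x a -> achievement_set x b ->
    a <= z -> z <= b -> achievement_set x z.

Definition nonincr_seq {R : realType} (x : nat -> R) : Prop :=
  forall n, x n.+1 <= x n.

Definition card_fn_is {R : realType} (x : nat -> R) (y : R) (k : nat) : Prop :=
  (representations x y #= `I_k)%card.

Definition range_card_fn_12 {R : realType} (x : nat -> R) : Prop :=
  (forall y, achievement_set x y -> card_fn_is x y 1 \/ card_fn_is x y 2) /\
  (exists y, achievement_set x y /\ card_fn_is x y 1) /\
  (exists y, achievement_set x y /\ card_fn_is x y 2).

(* Main.v *)
Require Import Defs.
From HB Require Import structures.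
From mathcomp Require Import all_boot all_order all_algebra.
From mathcomp Require Import all_classical all_reals all_analysis.
From mathcomp Require Import ring lra.
Import Order.TTheory GRing.Theory Num.Theory.
Import numFieldNormedType.Exports.
Local Open Scope classical_set_scope.
Local Open Scope ring_scope.

Definition ps {R : realType} (x : nat -> R) (e : nat -> bool) (N : nat) : R :=
  \sum_(0 <= n < N) (if e n then x n else 0).

Definition sumE {R : realType} (x : nat -> R) (e : nat -> bool) : R :=
  lim (ps x e n @[n --> \oo]).


Lemma card3 (T : Type) (S : set T) k (a b c : T) : (S #= `I_k)%card -> (k <= 2)%N ->
  S a -> S b -> S c -> a <> b -> a <> c -> b <> c -> False.
Proof.
move=> Sk k2 Sa Sb Sc ab ac bc.
pose g := fun i : nat => if i == 0%N then a else if i == 1%N then b else c.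
have ginj : {in `I_3 &, injective g}.
  move=> i j; rewrite !inE /= => Hi Hj.
  case: i Hi => [|[|[|i]]] // _; case: j Hj => [|[|[|j]]] // _;
    rewrite /g /= => // H; by [exfalso; apply: ab | exfalso; apply: ac |
      exfalso; apply: bc | exfalso; apply: ab; rewrite H | exfalso; apply: ac; rewrite H |
      exfalso; apply: bc; rewrite H].
have h1 : (`I_3 #<= S)%card.
  rewrite -(card_le_eql (inj_card_eq ginj)); apply: subset_card_le.
  by move=> _ [i Hi <-]; rewrite /g; case: ifP => _ //; case: ifP.
have := card_le_trans h1 (proj1 (iffLR (card_eqPle _ _) Sk)) => /=.
by rewrite card_le_II => /leq_trans /(_ k2).
Qed.

Fixpoint gs {R : realType} (x : nat -> R) (n : nat) (z : R) (k : nat) : R :=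
  match k with
  | 0 => 0
  | k'.+1 => gs x n z k' + (if (n < k')%N && (gs x n z k' + x k' <= z) then x k' else 0)
  end.

Section S1.
Variables (R : realType) (x : nat -> R).
Hypotheses (xpos : forall n, 0 < x n) (xsum : summable_seq x).

Lemma ps_nd (e : nat -> bool) :
  nondecreasing_seq (ps x e).
Proof.
move=> n m nm; rewrite /ps (big_cat_nat (leq0n n) nm) /= lerDl.
by apply: sumr_ge0 => i _; case: (e i) => //; exact: ltW.
Qed.

Lemma ps_le (e d : nat -> bool) N :
  (forall i, e i -> d i) -> ps x e N <= ps x d N.
Proof.
move=> ed; rewrite /ps; apply: ler_sum => i _.
case: (boolP (e i)) => ei; first by rewrite (ed _ ei).
by case: (d i) => //; exact: ltW.
Qed.

Lemma ps_cvg (e : nat -> bool) : ps x e n @[n --> \oo] --> sumE x e.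
Proof.
have [L HL] := xsum.
apply: nondecreasing_is_cvgn; first exact: ps_nd.
exists L => _ [N _ <-].
apply: (le_trans (ps_le e (fun=> true) N _)) => //.
have -> : ps x (fun=> true) N = \sum_(0 <= n < N) x n by [].
have nd : nondecreasing_seq (fun N => \sum_(0 <= n < N) x n).
  by move=> n m nm; have := ps_nd (fun=> true) n m nm.
rewrite -(cvg_lim _ HL) //; apply: nondecreasing_cvgn_le => //.
by apply/cvg_ex; exists L.
Qed.

Lemma subsumE (e : nat -> bool) y : subsum_to x e y <-> y = sumE x e.
Proof.
split; first by move=> H; rewrite /sumE (cvg_lim _ H).
by move=> ->; exact: ps_cvg.
Qed.

Lemma sumE_ge_ps (e : nat -> bool) N : ps x e N <= sumE x e.
Proof.
apply: nondecreasing_cvgn_le; first exact: ps_nd.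
by apply/cvg_ex; exists (sumE x e); exact: (ps_cvg e).
Qed.

Lemma sumE_ge0 (e : nat -> bool) : 0 <= sumE x e.
Proof. by apply: le_trans (sumE_ge_ps e 0); rewrite /ps big_geq. Qed.

Lemma sumE_pt (e : nat -> bool) i : e i -> x i <= sumE x e.
Proof.
move=> ei; apply: le_trans (sumE_ge_ps e i.+1).
rewrite /ps big_nat_recr //= ei lerDr.
by apply: sumr_ge0 => j _; case: (e j) => //; exact: ltW.
Qed.

Lemma sumE_le (e d : nat -> bool) : (forall i, e i -> d i) -> sumE x e <= sumE x d.
Proof.
move=> ed; apply: (ler_cvg_to (ps_cvg e) (ps_cvg d)).
by apply: nearW => N; exact: ps_le.
Qed.

Lemma sumE_add (e d : nat -> bool) : (forall i, ~~ (e i && d i)) ->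
  sumE x (fun i => e i || d i) = sumE x e + sumE x d.
Proof.
move=> dis; apply: cvg_lim => //.
have -> : ps x (fun i => e i || d i) = (fun N => ps x e N + ps x d N).
  apply: funext => N; rewrite /ps -big_split /=; apply: eq_bigr => i _.
  by have := dis i; case: (e i); case: (d i); rewrite //= ?addr0 ?add0r.
by apply: cvgD; exact: (ps_cvg _).
Qed.

Lemma sumE_ext (e d : nat -> bool) : (forall i, e i = d i) -> sumE x e = sumE x d.
Proof. by move=> H; rewrite (funext H). Qed.

Lemma sumE_lt (e d : nat -> bool) i : (forall j, e j -> d j) -> d i -> ~~ e i ->
  sumE x e + x i <= sumE x d.
Proof.
move=> ed di nei.
rewrite (@sumE_ext d (fun j => e j || (d j && ~~ e j))); last first.
  by move=> j; case: (boolP (e j)) => ej; rewrite ?(ed _ ej) //= andbT.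
rewrite sumE_add; last by move=> j; case: (e j); rewrite ?andbF.
by rewrite lerD2l; apply: sumE_pt; rewrite di nei.
Qed.

Lemma sumE_near (e : nat -> bool) c : (\forall N \near \oo, ps x e N = c) ->
  sumE x e = c.
Proof. by move=> H; apply: lim_near_cst. Qed.

Lemma sumE_one i : sumE x (pred1 i) = x i.
Proof.
apply: sumE_near; exists i.+1 => // N /= iN.
rewrite /ps (big_cat_nat (leq0n i.+1) iN) /= big_nat_recr //= eqxx.
rewrite !big1_seq ?add0r ?addr0 //.
  by move=> j; rewrite /= mem_index_iota => /andP[ij _]; rewrite eq_sym (ltn_eqF ij).
by move=> j; rewrite /= mem_index_iota => /andP[_ ji]; rewrite (ltn_eqF ji).
Qed.

Lemma sumE_prefix k : sumE x (fun i => (i < k)%N) = \sum_(0 <= i < k) x i.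
Proof.
apply: sumE_near; exists k => // N /= kN.
rewrite /ps (big_cat_nat (leq0n k) kN) /=.
rewrite [X in _ + X]big1_seq ?addr0; last first.
  by move=> j; rewrite /= mem_index_iota => /andP[kj _]; rewrite ltnNge kj.
apply: eq_big_seq => j; rewrite mem_index_iota => /andP[_ ->] //.
Qed.

Lemma sumE_false : sumE x (fun=> false) = 0.
Proof. by apply: sumE_near; apply: nearW => N; rewrite /ps big1. Qed.

Lemma sumE_eq0 (e : nat -> bool) : sumE x e = 0 -> forall i, e i = false.
Proof.
move=> H i; apply/negP => ei; have := sumE_pt _ _ ei; rewrite H.
by rewrite leNgt xpos.
Qed.

Definition tl k := sumE x (fun i => (k <= i)%N).

Lemma tl_split k : tl k = x k + tl k.+1.
Proof.
rewrite /tl (sumE_ext _ (fun i => (i == k) || (k.+1 <= i)%N)); last first.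
  by move=> i; rewrite leq_eqVlt eq_sym.
rewrite sumE_add //; last by move=> i; case: eqP => // ->; rewrite ltnn.
by rewrite sumE_one.
Qed.

Lemma tl_ge0 k : 0 <= tl k.
Proof. exact: sumE_ge0. Qed.

Lemma tl_noninc k m : (k <= m)%N -> tl m <= tl k.
Proof. by move=> km; apply: sumE_le => i; apply: leq_trans. Qed.

Lemma tl_small d : 0 < d -> exists k, tl k < d.
Proof.
move=> d0; have [L HL] := xsum.
have TL : sumE x (fun=> true) = L.
  by rewrite /sumE; apply: cvg_lim => //.
have /cvgrPdist_lt /(_ d d0) [N _ HN] := HL.
exists N; have := HN N (leqnn N); rewrite /=.
have -> : tl N = L - \sum_(0 <= i < N) x i.
  rewrite -TL -(sumE_prefix N) (sumE_ext (fun=> true)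
     (fun i => (i < N)%N || (N <= i)%N)); last by move=> i; rewrite ltnNge orNb.
  rewrite sumE_add; last by move=> i; rewrite ltnNge andNb.
  by rewrite addrC addKr.
by move=> H; apply: le_lt_trans H; exact: ler_norm.
Qed.



Lemma xdec_le (xdec : nonincr_seq x) i j : (i <= j)%N -> x j <= x i.
Proof.
move=> /subnK <-; elim: (j - i)%N => [|k IH] //=.
by rewrite addSn; apply: le_trans IH; exact: xdec.
Qed.

Lemma kakeya (xdec : nonincr_seq x) (xif : interval_filling x) n :
  x n <= tl n.+1.
Proof.
rewrite leNgt; apply/negP => H.
have Aa : achievement_set x (tl n.+1) by exists (fun i => (n.+1 <= i)%N); apply/subsumE.
have Ab : achievement_set x (x n) by exists (pred1 n); apply/subsumE; rewrite sumE_one.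
have [e /subsumE ez] := xif _ _ ((tl n.+1 + x n) / 2) Aa Ab
   (midf_le (ltW H)).1 (midf_le (ltW H)).2.
case: (pselect (exists i, (i <= n)%N /\ e i)) => [[i [ilen ei]]|nex].
  have := sumE_pt e i ei; rewrite -ez => H1.
  have := xdec_le xdec _ _ ilen => H2.
  have := (midf_lt H).2; rewrite ltNge => /negP; apply.
  exact: le_trans H2 H1.
have : sumE x e <= tl n.+1.
  apply: sumE_le => i ei; rewrite ltnNge; apply/negP => iln; apply: nex.
  by exists i.
rewrite -ez => H1; have := (midf_lt H).1; rewrite ltNge => /negP; apply.
exact: H1.
Qed.

Lemma gs_ps n z k : gs x n z k =
  ps x (fun i => (n < i)%N && (gs x n z i + x i <= z)) k.
Proof.
elim: k => [|k IH]; first by rewrite /ps big_geq.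
by rewrite /ps big_nat_recr //= -/(ps _ _ _) -IH.
Qed.

Lemma gs0 n z k : (k <= n.+1)%N -> gs x n z k = 0.
Proof.
elim: k => [|k IH] // kn /=; rewrite IH ?(ltnW kn) //.
have -> : (n < k)%N = false by rewrite ltnNge -ltnS kn.
by rewrite /= add0r.
Qed.

Lemma greedy (K : forall k, x k <= tl k.+1) n z : 0 <= z -> z <= tl n.+1 ->
  exists e : nat -> bool, (forall i, e i -> (n < i)%N) /\ sumE x e = z.
Proof.
move=> z0 zt.
have inv : forall k, gs x n z (n.+1 + k) <= z <= gs x n z (n.+1 + k) + tl (n.+1 + k).
  have step : forall m, (n < m)%N -> gs x n z m <= z <= gs x n z m + tl m ->
      gs x n z m.+1 <= z <= gs x n z m.+1 + tl m.+1.
    move=> m nm /andP[h1 h2]; rewrite /= nm /=; case: ifP => H.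
      by rewrite H /= -addrA -tl_split.
    have H' : z < gs x n z m + x m by rewrite ltNge H.
    rewrite addr0 h1 /=; apply: le_trans (ltW H') _.
    by rewrite lerD2l K.
  elim=> [|k IH]; first by rewrite addn0 gs0 // z0 add0r.
  rewrite addnS; apply: step => //; by rewrite ltnS leq_addr.
exists (fun i => (n < i)%N && (gs x n z i + x i <= z)); split.
  by move=> i /andP[].
apply: cvg_lim => //; rewrite -(funext (gs_ps n z)).
apply/cvgrPdist_le => eps eps0.
have [k0 Hk0] := tl_small eps eps0.
exists (maxn k0 n.+1) => // N /= HN.
have [_ nN] : (k0 <= N)%N /\ (n.+1 <= N)%N by move: HN; rewrite geq_max => /andP.
move: (inv (N - n.+1)%N); rewrite subnKC // => /andP[h1 h2].
rewrite ger0_norm ?subr_ge0 //.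
rewrite lerBlDl; apply: (le_trans h2); rewrite lerD2l.
apply: le_trans (ltW Hk0); apply: tl_noninc.
by move: HN; rewrite geq_max => /andP[].
Qed.

Lemma tl_ge_x k : x k <= tl k.
Proof. by rewrite tl_split lerDl tl_ge0. Qed.

Lemma fwd_eq (xdec : nonincr_seq x) (xif : interval_filling x)
  (Hr : forall y, achievement_set x y -> card_fn_is x y 1 \/ card_fn_is x y 2) n :
  x n = tl n.+1.
Proof.
have K := kakeya xdec xif.
apply/eqP; rewrite eq_le K /=; rewrite leNgt; apply/negP => H.
have d0 : 0 < tl n.+1 - x n by rewrite subr_gt0.
have [k0 Hk0] := tl_small _ d0.
pose m := maxn k0 n.+1.
have nm : (n < m)%N by rewrite /m leq_max leqnn orbT.
have xm : x m < tl n.+1 - x n.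
  apply: le_lt_trans Hk0; apply: le_trans (tl_ge_x m) _.
  by apply: tl_noninc; rewrite /m leq_max leqnn.
have [T [Tm Tsum]] := greedy K m (x m) (ltW (xpos m)) (K m).
have ylt : x n + x m < tl n.+1 by lra.
have [R3 [R3n R3sum]] := greedy K n (x n + x m) (addr_ge0 (ltW (xpos n)) (ltW (xpos m)))
   (ltW ylt).
pose R1 := fun i => (i == n) || (i == m).
pose R2 := fun i => (i == n) || T i.
have nmF : (n == m) = false by rewrite ltn_eqF.
have R1sum : sumE x R1 = x n + x m.
  rewrite sumE_add ?sumE_one //.
  by move=> i; apply/negP => /andP[/eqP -> /eqP nm']; rewrite nm' eqxx in nmF.
have R2sum : sumE x R2 = x n + x m.
  rewrite sumE_add ?sumE_one ?Tsum //.
  move=> i; apply/negP => /andP[/eqP -> /Tm]; rewrite ltnNge => /negP; apply.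
  exact: ltnW.
have Ay : achievement_set x (x n + x m) by exists R1; apply/subsumE.
have [Hc|Hc] := Hr _ Ay.
- apply: (@card3 _ _ 1 R1 R2 R3 Hc isT).
  + by apply/subsumE.
  + by apply/subsumE.
  + by apply/subsumE.
  + move=> E; have := congr1 (fun f => f m) E; rewrite /R1 /R2 eqxx orbT /=.
    have -> : (m == n) = false by rewrite eq_sym.
    by case: (boolP (T m)) => // /Tm; rewrite ltnn.
  + move=> E; have := congr1 (fun f => f n) E; rewrite /R1 eqxx /=.
    by case: (boolP (R3 n)) => // /R3n; rewrite ltnn.
  + move=> E; have := congr1 (fun f => f n) E; rewrite /R2 eqxx /=.
    by case: (boolP (R3 n)) => // /R3n; rewrite ltnn.
- apply: (@card3 _ _ 2 R1 R2 R3 Hc isT).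
  + by apply/subsumE.
  + by apply/subsumE.
  + by apply/subsumE.
  + move=> E; have := congr1 (fun f => f m) E; rewrite /R1 /R2 eqxx orbT /=.
    have -> : (m == n) = false by rewrite eq_sym.
    by case: (boolP (T m)) => // /Tm; rewrite ltnn.
  + move=> E; have := congr1 (fun f => f n) E; rewrite /R1 eqxx /=.
    by case: (boolP (R3 n)) => // /R3n; rewrite ltnn.
  + move=> E; have := congr1 (fun f => f n) E; rewrite /R2 eqxx /=.
    by case: (boolP (R3 n)) => // /R3n; rewrite ltnn.
Qed.

Lemma geo_tl (Hg : forall k, x k = 2 * x k.+1) k : tl k = 2 * x k.
Proof.
have u : forall k, tl k - 2 * x k = tl 0 - 2 * x 0.
  elim=> [|j IH] //; rewrite -IH; have := tl_split j; have := Hg j; lra.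
set u0 := tl 0 - 2 * x 0 in u.
case: (ltgtP u0 0) => Hu.
- have [j Hj] := tl_small (- u0) ltac:(lra).
  have := u j; have := tl_ge_x j; lra.
- have [j Hj] := tl_small u0 Hu.
  have := u j; have := xpos j; lra.
- have := u k; lra.
Qed.

Lemma pair_struct (Hg : forall k, x k = 2 * x k.+1) (e d : nat -> bool) k :
  sumE x e = sumE x d -> e k = true -> d k = false ->
  (forall i, (i < k)%N -> e i = d i) ->
  (forall i, (k < i)%N -> e i = false) /\ (forall i, (k < i)%N -> d i = true).
Proof.
move=> Hs ek dk agree.
pose P := fun i => (i < k)%N && e i.
pose Ee := fun i => (k < i)%N && e i.
pose Dd := fun i => (k < i)%N && d i.
have He : sumE x e = sumE x P + x k + sumE x Ee.
  rewrite -sumE_one -!sumE_add.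
  - apply: sumE_ext => i; rewrite /P /Ee; case: (ltngtP i k) => //=.
    + by move=> ik; rewrite (ltn_eqF ik) !orbF.
    + by move=> ki; rewrite eq_sym (ltn_eqF ki).
    + by move=> ->; rewrite eqxx ek.
  - move=> i; rewrite /P /Ee; case: (ltngtP i k) => //=.
    + by move=> _; rewrite andbF.
    + by move=> ki; rewrite eq_sym (ltn_eqF ki).
    + by move=> _; rewrite andbF.
  - by move=> i; rewrite /P; apply/negP => /andP[/andP[ik _] /eqP ie]; rewrite ie ltnn in ik.
have Hd : sumE x d = sumE x P + sumE x Dd.
  rewrite -sumE_add.
  - apply: sumE_ext => i; rewrite /P /Dd; case: (ltngtP i k) => //= [ik|->].
      by rewrite orbF agree.
    by rewrite dk.
  - move=> i; rewrite /P /Dd; apply/negP => /andP[/andP[ik _] /andP[ki _]].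
    by have := ltn_trans ik ki; rewrite ltnn.
have tk : tl k.+1 = x k by rewrite geo_tl // -Hg.
have DdT : sumE x Dd <= tl k.+1 by apply: sumE_le => i /andP[].
have E0 : sumE x Ee = 0.
  apply/eqP; rewrite eq_le sumE_ge0 andbT.
  move: Hs; rewrite He Hd => Hs.
  have := sumE_ge0 P; lra.
split.
  move=> i ki; have := sumE_eq0 Ee E0 i; rewrite /Ee ki /= => -> //.
move=> i ki; apply/negP => /negP ndi.
have nDd : ~~ Dd i by rewrite /Dd negb_and ndi orbT.
have H2 : sumE x Dd + x i <= tl k.+1 :=
  sumE_lt Dd (fun j => (k.+1 <= j)%N) i (fun j H => proj1 (andP H)) ki nDd.
move: Hs; rewrite He Hd => Hs.
have := xpos i; have := sumE_ge0 Ee; lra.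
Qed.

Definition Ev0 (e : nat -> bool) := exists k, forall i, (k < i)%N -> e i = false.
Definition Ev1 (e : nat -> bool) := exists k, forall i, (k < i)%N -> e i = true.

Lemma Ev01 e : Ev0 e -> Ev1 e -> False.
Proof.
move=> [k1 H1] [k2 H2].
have a1 : e (maxn k1 k2).+1 = false by apply: H1; rewrite ltnS leq_maxl.
have a2 : e (maxn k1 k2).+1 = true by apply: H2; rewrite ltnS leq_maxr.
by rewrite a1 in a2.
Qed.

Lemma first_diff (e d : nat -> bool) : e <> d ->
  exists k, e k <> d k /\ forall i, (i < k)%N -> e i = d i.
Proof.
move=> ed.
have ex : exists k, e k != d k.
  apply: contra_notP ed => H; apply: funext => i.
  by apply/eqP; apply: contra_notT H => Hi; exists i.
case: (ex_minnP ex) => k Hk Hmin; exists k; split; first exact/eqP.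
move=> i ik; apply/eqP; apply: contraTT ik => Hi.
by rewrite -leqNgt; apply: Hmin.
Qed.

Lemma pair_types (Hg : forall k, x k = 2 * x k.+1) (e d : nat -> bool) :
  sumE x e = sumE x d -> e <> d -> (Ev0 e /\ Ev1 d) \/ (Ev1 e /\ Ev0 d).
Proof.
move=> Hs ed; have [k [Hk Hlt]] := first_diff e d ed.
case ek : (e k).
- have dk : d k = false by move: Hk; rewrite ek; case: (d k).
  have [h1 h2] := pair_struct Hg e d k Hs ek dk Hlt.
  by left; split; exists k.
- have dk : d k = true by move: Hk; rewrite ek; case: (d k).
  have [h1 h2] := pair_struct Hg d e k (esym Hs) dk ek (fun i Hi => esym (Hlt i Hi)).
  by right; split; exists k.
Qed.

Lemma no3 (Hg : forall k, x k = 2 * x k.+1) (a b c : nat -> bool) :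
  sumE x a = sumE x b -> sumE x a = sumE x c -> a <> b -> a <> c -> b <> c -> False.
Proof.
move=> ab ac nab nac nbc.
have bc : sumE x b = sumE x c by rewrite -ab.
have [[A0 B1]|[A1 B0]] := pair_types Hg _ _ ab nab.
- have [[_ C1]|[A1 _]] := pair_types Hg _ _ ac nac; last exact: Ev01 _ A0 A1.
  have [[B0 _]|[_ C0]] := pair_types Hg _ _ bc nbc; first exact: Ev01 _ B0 B1.
  exact: Ev01 _ C0 C1.
- have [[A0 _]|[_ C0]] := pair_types Hg _ _ ac nac; first exact: Ev01 _ A0 A1.
  have [[_ C1]|[B1 _]] := pair_types Hg _ _ bc nbc; last exact: Ev01 _ B0 B1.
  exact: Ev01 _ C0 C1.
Qed.

Lemma card12 (Hg : forall k, x k = 2 * x k.+1) y (e0 : nat -> bool) :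
  sumE x e0 = y ->
  ((forall d, sumE x d = y -> d = e0) -> card_fn_is x y 1) /\
  (forall d0, sumE x d0 = y -> d0 <> e0 -> card_fn_is x y 2).
Proof.
move=> He0; split.
  move=> Hall; rewrite /card_fn_is.
  have -> : representations x y = [set e0].
    apply/seteqP; split => d /=.
      by move/subsumE => Hd; apply: Hall; rewrite -Hd.
    by move=> ->; apply/subsumE.
  exact: card_set1.
move=> d0 Hd0 nd; rewrite /card_fn_is.
pose g := fun i : nat => if i == 0%N then e0 else d0.
have -> : representations x y = g @` `I_2.
  apply/seteqP; split => d /=.
    move/subsumE => Hd.
    case: (pselect (d = e0)) => [->|n0]; first by exists 0%N.
    case: (pselect (d = d0)) => [->|n1]; first by exists 1%N.
    exfalso; apply: (no3 Hg d e0 d0) => //; first by rewrite He0.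
      by rewrite Hd0.
    by move/esym.
  move=> [i Hi <-]; apply/subsumE; rewrite /g; case: ifP => _ //.
have ginj : {in `I_2 &, injective g}.
  move=> i j; rewrite !inE /= => Hi Hj.
  case: i Hi => [|[|i]] // _; case: j Hj => [|[|j]] // _; rewrite /g /= => // H;
    by exfalso; apply: nd; rewrite H.
exact: inj_card_eq ginj.
Qed.

Lemma main_thm (xdec : nonincr_seq x) (xif : interval_filling x) :
  range_card_fn_12 x <-> exists c : R, 0 < c /\ forall n, x n = c / 2 ^+ n.
Proof.
split.
  move=> [Hr _]; have E := fwd_eq xdec xif Hr.
  have Hh : forall n, x n = 2 * x n.+1.
    by move=> n; rewrite E tl_split -E; lra.
  exists (x 0%N); split; first exact: xpos.
  elim=> [|n IH]; first by rewrite expr0 divr1.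
  rewrite exprSr invfM mulrA -IH; have := Hh n; lra.
move=> [c [c0 Hc]].
have Hg : forall k, x k = 2 * x k.+1.
  move=> k; rewrite !Hc exprSr; field; exact: expf_neq0.
split.
  move=> y [e /subsumE He].
  case: (pselect (forall d, sumE x d = y -> d = e)) => H.
    by left; apply: (proj1 (card12 Hg y e (esym He))).
  have [d /not_implyP [Hd1 Hd2]] : exists d, ~ (sumE x d = y -> d = e).
    by apply/existsNP.
  by right; apply: (proj2 (card12 Hg y e (esym He))) d Hd1 Hd2.
split.
  exists 0; split; first by exists (fun=> false); apply/subsumE; rewrite sumE_false.
  apply: (proj1 (card12 Hg 0 (fun=> false) sumE_false)).
  by move=> d Hd; apply: funext => i; apply: sumE_eq0.
exists (x 0%N); split.
  by exists (pred1 0%N); apply/subsumE; rewrite sumE_one.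
apply: (proj2 (card12 Hg (x 0%N) (pred1 0%N) (sumE_one 0%N))) (fun i => (1 <= i)%N) _ _.
  by rewrite -/(tl 1) geo_tl // -Hg.
by move=> H; have := congr1 (fun f => f 0%N) H.
Qed.

End S1.

Theorem corollary3p8 (R : realType) (x : nat -> R)
  (xpos : forall n, 0 < x n) (xsum : summable_seq x)
  (xdec : nonincr_seq x) (xif : interval_filling x) :
  range_card_fn_12 x <-> exists c : R, 0 < c /\ forall n, x n = c / 2 ^+ n.
Proof. exact: (@main_thm R x xpos xsum xdec xif). Qed.
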